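(* Let $\{\mathbb{P}_{s,t}\in\mathcal{Q}:0\le s\le t\}$ be a quadratic harness with parameters $\eta,\theta,\sigma,\tau,\gamma$, and let $\mathbb{A}_t$ ($t>0$) be its infinitesimal generator. For $t>0$ put $$\mathbb{H}_t=\mathbb{A}_t\mathbb{F}-\mathbb{F}\mathbb{A}_t,\qquad \mathbb{T}_t=\mathbb{F}-t\mathbb{H}_t .$$ Then $$\mathbb{H}_t\mathbb{T}_t-\gamma\,\mathbb{T}_t\mathbb{H}_t=\mathbb{E}+\theta\mathbb{H}_t+\eta\mathbb{T}_t+\tau\mathbb{H}_t^{2}+\sigma\mathbb{T}_t^{2}.$$
   Context: $\mathcal{Q}$ denotes the real linear space of all infinite sequences $\mathbb{P}=(p_0,p_1,p_2,\dots)$ of real polynomials in one variable $x$, equipped with the product $\mathbb{P}\mathbb{Q}=\mathbb{R}=(r_0,r_1,\dots)$, where for $\mathbb{Q}=(q_0,q_1,\dots)$ one sets $r_k(x)=\sum_{j=0}^{\deg q_k}[q_k]_j\,p_j(x)$, and $[q]_j$ denotes the coefficient of $x^j$ in $q$. (Equivalently, identifying a linear map $\mathsf{P}$ of the polynomial space with the sequence $(\mathsf{P}(1),\mathsf{P}(x),\mathsf{P}(x^2),\dots)$, the product corresponds to composition $\mathsf{P}\circ\mathsf{Q}$.) Powers are taken with respect to this product. Special elements: $\mathbb{E}=(1,x,x^2,\dots)$ (the identity), $\mathbb{F}=(x,x^2,x^3,\dots)$, $\mathbb{D}=(0,1,x,x^2,\dots)$. A polynomial process is a family $\{\mathbb{P}_{s,t}\in\mathcal{Q}:0\le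 s\le t\}$ such that: (i) for all $0\le s\le t$ and $n\ge0$ the $n$-th component of $\mathbb{P}_{s,t}$ is a polynomial of degree exactly $n$; (ii) $\mathbb{P}_{s,t}(\mathbb{E}-\mathbb{F}\mathbb{D})=\mathbb{E}-\mathbb{F}\mathbb{D}$; (iii) $\mathbb{P}_{s,t}\mathbb{P}_{t,u}=\mathbb{P}_{s,u}$ for $0\le s\le t\le u$. Given real numbers $\eta,\theta,\sigma,\tau,\gamma$, a polynomial process is a quadratic harness with parameters $\eta,\theta,\sigma,\tau,\gamma$ if: (a) $\mathbb{P}_{s,t}(\mathbb{F}\mathbb{D}-\mathbb{F}^2\mathbb{D}^2)=\mathbb{F}\mathbb{D}-\mathbb{F}^2\mathbb{D}^2$ for all $0\le s\le t$; (b) there is $\mathbb{X}\in\mathcal{Q}$ with $\mathbb{P}_{0,t}\mathbb{F}=(\mathbb{F}+t\mathbb{X})\mathbb{P}_{0,t}$ for all $t\ge0$; (c) this $\mathbb{X}$ satisfies $\mathbb{X}\mathbb{F}-\gamma\mathbb{F}\mathbb{X}=\mathbb{E}+\eta\mathbb{F}+\theta\mathbb{X}+\sigma\mathbb{F}^2+\tau\mathbb{X}^2$. The infinitesimal generator is $\mathbb{A}_t=\lim_{h\to0^+}\frac1h(\mathbb{P}_{t-h,t}-\mathbb{E})\in\mathcal{Q}$, $t>0$, the limit taken coefficientwise in each component (it exists for such processes). *)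

(* Defs.v *)
From HB Require Import structures.
From mathcomp Require Import all_boot all_order all_algebra.
From mathcomp Require Import all_classical all_reals all_analysis.
Set Implicit Arguments. Unset Strict Implicit. Unset Printing Implicit Defensive.
Import Order.TTheory GRing.Theory Num.Theory.
Local Open Scope ring_scope.
Local Open Scope classical_set_scope.
Import numFieldNormedType.Exports.

Definition Qseq (R : realType) := nat -> {poly R}.

Section Q.
Variable R : realType.
Implicit Types P Q : Qseq R.

Definition qmul P Q : Qseq R :=
  fun k => \sum_(j < size (Q k)) (Q k)`_j *: P j.
Definition qadd P Q : Qseq R := fun k => P k + Q k.
Definition qsub P Q : Qseq R := fun k => P k - Q k.
Definition qscale (c : R) P : Qseq R := fun k => c *: P k.
Definition qE : Qseq R := fun n => ('X ^+ n : {poly R}).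
Definition qF : Qseq R := fun n => ('X ^+ n.+1 : {poly R}).
Definition qD : Qseq R := fun n => if n is m.+1 then ('X ^+ m : {poly R}) else 0.
Fixpoint qexp P (n : nat) : Qseq R :=
  if n is m.+1 then qmul P (qexp P m) else qE.

Definition poly_process (P : R -> R -> Qseq R) : Prop :=
  [/\ (forall s t n, 0 <= s -> s <= t -> size (P s t n) = n.+1),
      (forall s t, 0 <= s -> s <= t ->
         qmul (P s t) (qsub qE (qmul qF qD)) = qsub qE (qmul qF qD)) &
      (forall s t u, 0 <= s -> s <= t -> t <= u ->
         qmul (P s t) (P t u) = P s u)].

Definition quadratic_harness (P : R -> R -> Qseq R)
    (eta theta sigma tau gamma : R) : Prop :=
  [/\ poly_process P,
      (forall s t, 0 <= s -> s <= t ->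
         qmul (P s t) (qsub (qmul qF qD) (qmul (qexp qF 2) (qexp qD 2)))
         = qsub (qmul qF qD) (qmul (qexp qF 2) (qexp qD 2))) &
      exists X : Qseq R,
        (forall t, 0 <= t ->
           qmul (P 0 t) qF = qmul (qadd qF (qscale t X)) (P 0 t)) /\
        qsub (qmul X qF) (qscale gamma (qmul qF X))
        = qadd (qadd (qadd (qadd qE (qscale eta qF)) (qscale theta X))
                     (qscale sigma (qexp qF 2))) (qscale tau (qexp X 2))].

Definition is_generator (P : R -> R -> Qseq R) (A : R -> Qseq R) : Prop :=
  forall t, 0 < t -> forall n j : nat,
    (fun h : R => ((P (t - h) t n)`_j - (qE n)`_j) / h) @ 0^'+
      --> (A t n)`_j.
End Q.

Arguments qE {R}.
Arguments qF {R}.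
Arguments qD {R}.

(* Main.v *)
Require Import Defs.
From HB Require Import structures.
From mathcomp Require Import all_boot all_order all_algebra.
From mathcomp Require Import all_classical all_reals all_analysis.
Import Order.TTheory GRing.Theory Num.Theory.
Local Open Scope ring_scope.
Local Open Scope classical_set_scope.
Import numFieldNormedType.Exports.

Section Alg.
Variable R : realType.
Implicit Types P Q S U V W : Qseq R.

Definition linq P (p : {poly R}) := \sum_(j < size p) p`_j *: P j.

Lemma qmulE P Q k : qmul P Q k = linq P (Q k).
Proof. by []. Qed.

Lemma linq_bound P (p : {poly R}) n : (size p <= n)%N ->
  linq P p = \sum_(j < n) p`_j *: P j.
Proof.
move=> hn; rewrite /linq (big_ord_widen n (fun j => p`_j *: P j) hn) big_mkcond.
apply: eq_bigr => j _; case: ifP => // /negbT; rewrite -leqNgt => hj.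
by rewrite nth_default // scale0r.
Qed.

Lemma linqD P p q : linq P (p + q) = linq P p + linq P q.
Proof.
set n := maxn (size p) (size q).
rewrite (@linq_bound P (p + q) (n)); last by rewrite size_polyD.
rewrite (@linq_bound P (p) (n)) ?leq_maxl //.
rewrite (@linq_bound P (q) (n)) ?leq_maxr //.
rewrite -big_split /=; apply: eq_bigr => j _; by rewrite coefD scalerDl.
Qed.

Lemma linqZ P c p : linq P (c *: p) = c *: linq P p.
Proof.
rewrite (@linq_bound P (c *: p) (size p)); last exact: size_scale_leq.
rewrite /linq scaler_sumr; apply: eq_bigr => j _; by rewrite coefZ scalerA.
Qed.

Lemma linq0 P : linq P 0 = 0.
Proof. by rewrite /linq size_poly0 big_ord0. Qed.

Lemma linqN P p : linq P (- p) = - linq P p.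
Proof. by rewrite -scaleN1r linqZ scaleN1r. Qed.

Lemma linqB P p q : linq P (p - q) = linq P p - linq P q.
Proof. by rewrite linqD linqN. Qed.

Lemma linq_sum P n (F : 'I_n -> {poly R}) :
  linq P (\sum_(i < n) F i) = \sum_(i < n) linq P (F i).
Proof. exact: (big_morph (linq P) (linqD P) (linq0 P)). Qed.

Lemma linqXn P n : linq P ('X^n) = P n.
Proof.
rewrite /linq size_polyXn big_ord_recr /= big1 ?add0r.
  by rewrite coefXn eqxx scale1r.
move=> i _; by rewrite coefXn (ltn_eqF (ltn_ord i)) scale0r.
Qed.

Lemma linqE p : linq qE p = p.
Proof. by rewrite /linq /qE -poly_def coefK. Qed.

Lemma linqF p : linq qF p = 'X * p.
Proof.
have -> : 'X * p = 'X * \poly_(i < size p) p`_i by rewrite coefK.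
rewrite /linq /qF poly_def mulr_sumr; apply: eq_bigr => j _.
by rewrite exprS scalerAr.
Qed.

Lemma qmulA P Q S : qmul (qmul P Q) S = qmul P (qmul Q S).
Proof.
apply/funext => k; rewrite [RHS]qmulE [qmul Q S k]qmulE [linq Q _]/linq linq_sum.
rewrite qmulE {1}/linq; apply: eq_bigr => j _.
by rewrite linqZ.
Qed.

Lemma qmul1l P : qmul qE P = P.
Proof. by apply/funext => k; rewrite qmulE linqE. Qed.
Lemma qmul1r P : qmul P qE = P.
Proof. by apply/funext => k; rewrite qmulE linqXn. Qed.

Lemma qmulDl P Q S : qmul (qadd P Q) S = qadd (qmul P S) (qmul Q S).
Proof. by apply/funext => k; rewrite /qmul /qadd -big_split; apply: eq_bigr => j _; rewrite scalerDr. Qed.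
Lemma qmulBl P Q S : qmul (qsub P Q) S = qsub (qmul P S) (qmul Q S).
Proof. by apply/funext => k; rewrite /qmul /qsub -sumrB; apply: eq_bigr => j _; rewrite scalerBr. Qed.
Lemma qmulZl c P S : qmul (qscale c P) S = qscale c (qmul P S).
Proof. by apply/funext => k; rewrite /qmul /qscale scaler_sumr; apply: eq_bigr => j _; rewrite !scalerA mulrC. Qed.
Lemma qmulDr P Q S : qmul P (qadd Q S) = qadd (qmul P Q) (qmul P S).
Proof. by apply/funext => k; rewrite !qmulE /qadd linqD. Qed.
Lemma qmulBr P Q S : qmul P (qsub Q S) = qsub (qmul P Q) (qmul P S).
Proof. by apply/funext => k; rewrite !qmulE /qsub linqB. Qed.
Lemma qmulZr c P S : qmul P (qscale c S) = qscale c (qmul P S).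
Proof. by apply/funext => k; rewrite !qmulE /qscale linqZ. Qed.

Definition inter W U U' := qmul W U = qmul U' W.

Lemma inter_add W U U' V V' : inter W U U' -> inter W V V' ->
  inter W (qadd U V) (qadd U' V').
Proof. by rewrite /inter qmulDr qmulDl => -> ->. Qed.
Lemma inter_sub W U U' V V' : inter W U U' -> inter W V V' ->
  inter W (qsub U V) (qsub U' V').
Proof. by rewrite /inter qmulBr qmulBl => -> ->. Qed.
Lemma inter_scale W c U U' : inter W U U' -> inter W (qscale c U) (qscale c U').
Proof. by rewrite /inter qmulZr qmulZl => ->. Qed.
Lemma inter_mul W U U' V V' : inter W U U' -> inter W V V' ->
  inter W (qmul U V) (qmul U' V').
Proof. by rewrite /inter -qmulA => -> HV; rewrite qmulA HV qmulA. Qed.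
Lemma inter_E W : inter W qE qE.
Proof. by rewrite /inter qmul1l qmul1r. Qed.
Lemma inter_exp W U U' n : inter W U U' -> inter W (qexp U n) (qexp U' n).
Proof. move=> h; elim: n => [|n IH] /=; [exact: inter_E | exact: inter_mul]. Qed.

Lemma linq_inj P p : (forall n, size (P n) = n.+1) -> linq P p = 0 -> p = 0.
Proof.
move=> hs h; apply/eqP; apply: contraT => hp.
have hsz : size p = (size p).-1.+1 by rewrite prednK // lt0n size_poly_eq0.
set m := (size p).-1 in hsz.
have := congr1 (fun q : {poly R} => q`_m) h.
rewrite /linq coef0 coef_sum hsz big_ord_recr /= big1 ?add0r.
  rewrite coefZ => hz.
  suff : p`_m * (P m)`_m != 0 by rewrite hz eqxx.
  rewrite mulf_neq0 //.
    have := lead_coef_eq0 p; rewrite /lead_coef hsz /= => ->; exact: hp.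
  have := lead_coef_eq0 (P m); rewrite /lead_coef (hs m) /= => ->.
  by rewrite -size_poly_eq0 (hs m).
move=> i _; rewrite coefZ [(P i)`_m]nth_default ?mulr0 // (hs i); exact: ltn_ord.
Qed.

Lemma qmul_inj (W U V : Qseq R) : (forall n, size (W n) = n.+1) ->
  qmul W U = qmul W V -> U = V.
Proof.
move=> hs h; apply/funext => k; apply/eqP; rewrite -subr_eq0; apply/eqP.
apply: (@linq_inj W _ hs); rewrite linqB -!qmulE h; exact: subrr.
Qed.
Lemma near_cvg (f g : R -> R) (l : R) :
  (\forall x \near 0^'+, f x = g x) -> g x @[x --> 0^'+] --> l -> f x @[x --> 0^'+] --> l.
Proof.
move=> e hg; apply: cvg_trans hg; apply: near_eq_cvg; near=> x.
by rewrite (near e x).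
Unshelve. all: by end_near.
Qed.
Lemma lim_uniq (f : R -> R) (a b : R) : f x @[x --> 0^'+] --> a -> f x @[x --> 0^'+] --> b -> a = b.
Proof. move=> ha hb; by rewrite -(cvg_lim (@Rhausdorff R) ha) (cvg_lim (@Rhausdorff R) hb). Qed.
Lemma cvg_h : (fun h : R => h) @ 0^'+ --> (0:R).
Proof. exact: cvg_at_right_filter cvg_id. Qed.
Lemma cvg_sumN N (f : nat -> R -> R) (a : nat -> R) :
  (forall i, (i < N)%N -> f i x @[x --> 0^'+] --> a i) ->
  (fun x => \sum_(i < N) f i x) @ 0^'+ --> \sum_(i < N) a i.
Proof.
elim: N => [|N IH] h.
  under eq_fun do rewrite big_ord0. rewrite big_ord0; exact: cvg_cst.
under eq_fun do rewrite big_ord_recr. rewrite big_ord_recr /=.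
apply: cvgD; last exact: h.
apply: IH => i hi; apply: h; exact: leqW.
Qed.
Variables (P : R -> R -> Qseq R) (A : R -> Qseq R) (X : Qseq R) (t : R).
Hypothesis hsz : forall s t n, 0 <= s -> s <= t -> size (P s t n) = n.+1.
Hypothesis hgen : is_generator P A.
Hypothesis ht : 0 < t.

Lemma near_h : \forall h \near 0^'+, 0 <= t - h /\ t - h <= t /\ h != 0.
Proof.
near=> h; have h0 : 0 < h by near: h; exact: nbhs_right_gt.
have h1 : h < t by near: h; exact: nbhs_right_lt.
split; first by rewrite subr_ge0 ltW.
split; first by rewrite lerBlDr lerDl ltW.
by rewrite gt_eqF.
Unshelve. all: by end_near.
Qed.

Lemma ph_cvg n j : (fun h => (P (t - h) t n)`_j) @ 0^'+ --> (qE n)`_j.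
Proof.
have hg := hgen t ht n j.
apply: (@near_cvg _ (fun h => h * (((P (t - h) t n)`_j - (qE n)`_j) / h) + (qE n)`_j)).
  near=> h; have [_ [_ hh]] : 0 <= t - h /\ t - h <= t /\ h != 0 by near: h; exact: near_h.
  by rewrite mulrC mulfVK // subrK.
rewrite -[X in _ --> X]add0r; apply: cvgD; last exact: cvg_cst.
have hm := cvgM cvg_h hg; rewrite mul0r in hm; exact: hm.
Unshelve. all: by end_near.
Qed.

Lemma A_size n j : (n < j)%N -> (A t n)`_j = 0.
Proof.
move=> hj; have hg := hgen t ht n j.
apply: (lim_uniq _ _ _ hg); apply: (@near_cvg _ (fun _ => 0)); last exact: cvg_cst.
near=> h; have [h0 [h1 _]] : 0 <= t - h /\ t - h <= t /\ h != 0 by near: h; exact: near_h.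
rewrite /qE coefXn (gtn_eqF hj) nth_default ?subr0 ?mul0r // (hsz _ _ n h0 h1).
exact: hj.
Unshelve. all: by end_near.
Qed.

Hypothesis hcomp : forall s t u, 0 <= s -> s <= t -> t <= u ->
  qmul (P s t) (P t u) = P s u.

Lemma q0_cvg j m : (fun h => (P 0 (t - h) j)`_m) @ 0^'+ --> (P 0 t j)`_m.
Proof.
elim/ltn_ind: j m => j IH m.
apply: (@near_cvg _ (fun h => ((P 0 t j)`_m - \sum_(i < j) (P (t - h) t j)`_i * (P 0 (t - h) i)`_m) * ((P (t - h) t j)`_j)^-1)).
  near=> h; have [h0 [h1 _]] : 0 <= t - h /\ t - h <= t /\ h != 0 by near: h; exact: near_h.
  have := congr1 (fun Q : Qseq R => (Q j)`_m) (hcomp _ _ _ (lexx 0) h0 h1).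
  rewrite /= /qmul (hsz _ _ j h0 h1) coef_sum big_ord_recr /= coefZ => <-.
  have hl : (P (t - h) t j)`_j != 0.
    have := lead_coef_eq0 (P (t - h) t j); rewrite /lead_coef (hsz _ _ j h0 h1) /= => ->.
    by rewrite -size_poly_eq0 (hsz _ _ j h0 h1).
  under eq_bigr do rewrite coefZ.
  by rewrite addrAC subrr add0r mulrC mulKf.
have hS : (fun h => \sum_(i < j) (P (t - h) t j)`_i * (P 0 (t - h) i)`_m) @ 0^'+
    --> \sum_(i < j) (qE j)`_i * (P 0 t i)`_m.
  apply: (@cvg_sumN j (fun i h => (P (t - h) t j)`_i * (P 0 (t - h) i)`_m)
     (fun i => (qE j)`_i * (P 0 t i)`_m)) => i hi.
  apply: cvgM; [exact: ph_cvg | exact: IH].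
have hN : (fun h => (P 0 t j)`_m - \sum_(i < j) (P (t - h) t j)`_i * (P 0 (t - h) i)`_m)
   @ 0^'+ --> (P 0 t j)`_m - \sum_(i < j) (qE j)`_i * (P 0 t i)`_m.
  by apply: cvgB => //; exact: cvg_cst.
have h1 : (fun h => (P (t - h) t j)`_j) @ 0^'+ --> (1:R).
  by have := ph_cvg j j; rewrite /qE coefXn eqxx.
have hD : (fun h => ((P (t - h) t j)`_j)^-1) @ 0^'+ --> (1:R)^-1.
  by apply: cvgV => //; exact: oner_neq0.
have hM := cvgM hN hD.
have e : ((P 0 t j)`_m - \sum_(i < j) (qE j)`_i * (P 0 t i)`_m) * 1^-1 = (P 0 t j)`_m.
  rewrite invr1 mulr1 big1 ?subr0 // => i _.
  by rewrite /qE coefXn (ltn_eqF (ltn_ord i)) mul0r.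
rewrite e in hM; apply: hM.
Unshelve. all: by end_near.
Qed.

Hypothesis hX : forall s, 0 <= s ->
  qmul (P 0 s) qF = qmul (qadd qF (qscale s X)) (P 0 s).

Lemma size_Xsub (p q : {poly R}) n : (size p <= n.+2)%N -> (size q <= n.+1)%N ->
  (size (p - 'X * q)%R <= n.+2)%N.
Proof.
move=> hp hq; apply/leq_sizeP => j hj; rewrite coefB coefXM.
have -> : p`_j = 0 by move/leq_sizeP: hp; apply.
case: j hj => [//|j] hj /=.
by rewrite (leq_sizeP _ _ hq j hj) subrr.
Qed.

Lemma Eh h : 0 <= t - h -> t - h <= t ->
  qmul (P 0 (t - h)) (qsub (qmul (P (t - h) t) qF) (qmul qF (P (t - h) t)))
  = qscale h (qmul X (P 0 t)).
Proof.
move=> h0 h1.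
rewrite qmulBr -!qmulA (hcomp _ _ _ (lexx 0) h0 h1) (hX _ h0) qmulA (hcomp _ _ _ (lexx 0) h0 h1).
rewrite (hX _ (ltW ht)) !qmulDl !qmulZl.
apply/funext => k; rewrite /qsub /qadd /qscale scalerBl.
set a := qmul qF (P 0 t) k; set b := qmul X (P 0 t) k.
by rewrite opprD addrACA subrr add0r opprB addrC subrK.
Qed.

Lemma A_sizeb n : (size (A t n) <= n.+1)%N.
Proof. apply/leq_sizeP => j hj; exact: A_size. Qed.

Lemma main_inter :
  qmul (P 0 t) (qsub (qmul (A t) qF) (qmul qF (A t))) = qmul X (P 0 t).
Proof.
apply/funext => k; apply/polyP => m.
set H := qsub _ _.
have eH : H k = A t k.+1 - 'X * A t k by rewrite /H /qsub !qmulE /qF linqXn linqF.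
have sH : (size (H k) <= k.+2)%N by rewrite eH; apply: size_Xsub; exact: A_sizeb.
rewrite qmulE (linq_bound _ _ _ sH) coef_sum.
under eq_bigr do rewrite coefZ eH coefB coefXM.
set g := fun (n i : nat) (h : R) => ((P (t - h) t n)`_i - (qE n)`_i) / h.
pose F := fun h => \sum_(j < k.+2)
   (g k.+1 j h - (if (j:nat) == 0%N then 0 else g k j.-1 h)) * (P 0 (t - h) j)`_m.
have L1 : F h @[h --> 0^'+] --> \sum_(j < k.+2)
     ((A t k.+1)`_j - (if (j:nat) == 0%N then 0 else (A t k)`_j.-1)) * (P 0 t j)`_m.
  apply: (@cvg_sumN k.+2 (fun j h => (g k.+1 j h - (if j == 0%N then 0 else g k j.-1 h)) * (P 0 (t - h) j)`_m)
     (fun j => ((A t k.+1)`_j - (if j == 0%N then 0 else (A t k)`_j.-1)) * (P 0 t j)`_m)) => j hj.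
  apply: cvgM; last exact: q0_cvg.
  apply: cvgB; first exact: (hgen t ht).
  case: (j == 0%N); [exact: cvg_cst | exact: (hgen t ht)].
apply: (lim_uniq _ _ _ L1).
apply: near_cvg; last exact: cvg_cst.
near=> h; have [h0 [h1 hh]] : 0 <= t - h /\ t - h <= t /\ h != 0 by near: h; exact: near_h.
have := congr1 (fun Q : Qseq R => (Q k)`_m) (Eh _ h0 h1).
rewrite /= qmulE /qsub !qmulE /qF linqXn linqF.
have sD : (size (P (t - h) t k.+1 - 'X * P (t - h) t k)%R <= k.+2)%N.
  by apply: size_Xsub; rewrite (hsz _ _ _ h0 h1).
rewrite (linq_bound _ _ _ sD) coef_sum /qscale coefZ => e.
apply: (mulfI hh); rewrite -e /F mulr_sumr; apply: eq_bigr => j _.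
rewrite coefZ mulrA; congr (_ * _).
rewrite /g /qE coefB coefXM exprS coefXM.
case: (nat_of_ord j == 0%N); first by rewrite subr0 mulrC mulfVK.
by rewrite -mulrBl mulrC mulfVK // opprB addrA subrK.
Unshelve. all: by end_near.
Qed.
End Alg.

Arguments inter_add {R W U U' V V'}.
Arguments inter_sub {R W U U' V V'}.
Arguments inter_mul {R W U U' V V'}.
Arguments inter_scale {R W} c {U U'}.
Arguments inter_exp {R W U U'} n.
Arguments inter_E {R} W.
Arguments qmul_inj {R W U V}.
Arguments inter {R}.


Lemma add5C (R : realType) (e a b c d : {poly R}) :
  e + a + b + c + d = e + b + a + d + c.
Proof. by rewrite (addrAC e a b) (addrAC _ c d). Qed.

Theorem theorem2p1 (R : realType) (P : R -> R -> Qseq R)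
    (eta theta sigma tau gamma : R) (A : R -> Qseq R) :
  quadratic_harness P eta theta sigma tau gamma ->
  is_generator P A ->
  forall t : R, 0 < t ->
    let H := qsub (qmul (A t) qF) (qmul qF (A t)) in
    let T := qsub qF (qscale t H) in
    qsub (qmul H T) (qscale gamma (qmul T H))
    = qadd (qadd (qadd (qadd qE (qscale theta H)) (qscale eta T))
                 (qscale tau (qexp H 2))) (qscale sigma (qexp T 2)).
Proof.
case=> [[hsz hid hcomp] ha [X [hX hXrel]]] hgen t ht H T.
have hPt : forall n, size (P 0 t n) = n.+1 := fun n => hsz 0 t n (lexx 0) (ltW ht).
have iH : inter (P 0 t) H X by exact: (main_inter _ _ _ _ _ hsz hgen ht hcomp hX).
have iT : inter (P 0 t) T qF.
  rewrite /inter /T qmulBr qmulZr iH (hX t (ltW ht)) qmulDl qmulZl.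
  by apply/funext => k; rewrite /qsub /qadd addrK.
apply: (qmul_inj hPt).
have L := inter_sub (inter_mul iH iT) (inter_scale gamma (inter_mul iT iH)).
have Rr := inter_add (inter_add (inter_add (inter_add (inter_E (P 0 t))
   (inter_scale theta iH)) (inter_scale eta iT)) (inter_scale tau (inter_exp 2 iH)))
   (inter_scale sigma (inter_exp 2 iT)).
rewrite /inter in L Rr; rewrite L Rr hXrel; congr (qmul _ _).
by apply/funext => k; rewrite /qadd add5C.
Qed.
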